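(* Let $X$ be a Tychonoff space and let $cX$, $dX$ be compactifications of $X$ with $dX\preceq cX$, witnessed by a continuous map $\varphi: cX\to dX$. Suppose $X$ is an $F_{\sigma\delta}$ subset of $cX$. Then $X$ is an $F_{\sigma\delta}$ subset of $dX$ if and only if there exists a sequence $(H_n)_{n\in\mathbb N}$ of $F_\sigma$ subsets of $cX$ such that for every $F\in\mathcal F(cX,dX)$ there is $n\in\mathbb N$ with $X\subset H_n\subset cX\setminus F$.
   Context: A compactification of $X$ is a pair $(cX,\varphi_c)$ with $cX$ compact Hausdorff and $\varphi_c$ a homeomorphic embedding of $X$ onto a dense subspace of $cX$; we identify $X$ with its image in $cX$ (and in $dX$). We write $dX\preceq cX$ (i.e. $cX$ is larger than $dX$) if there exists a continuous map $\varphi:cX\to dX$ with $\varphi_d=\varphi\circ\varphi_c$. For such $\varphi$, $\mathcal F(cX,dX):=\{\varphi^{-1}(x) : x\in dX,\ \varphi^{-1}(x)\text{ is not a singleton}\}$. An $F_{\sigma\delta}$ set is a countable intersection of $F_\sigma$ sets. *)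

(* Defs.v *)
From HB Require Import structures.
From mathcomp Require Import all_boot all_order all_algebra.
From mathcomp Require Import all_classical all_reals all_analysis.
From mathcomp Require Import borel_hierarchy.
Set Implicit Arguments. Unset Strict Implicit. Unset Printing Implicit Defensive.
Local Open Scope classical_set_scope.

Definition tychonoff_space (T : topologicalType) : Prop :=
  completely_regular_space T /\ hausdorff_space T.

Definition homeomorphic_embedding (X Y : topologicalType) (e : X -> Y) : Prop :=
  continuous e /\ injective e /\
  (forall U : set X, open U -> exists V : set Y, open V /\ e @` U = V `&` range e).

Definition compactification (X Y : topologicalType) (e : X -> Y) : Prop :=
  compact [set: Y] /\ hausdorff_space Y /\ homeomorphic_embedding e /\ dense (range e).

Definition Fsigmadelta (T : topologicalType) (S : set T) : Prop :=
  exists2 G : (set T)^nat, (forall i, Fsigma (G i)) & S = \bigcap_i G i.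

Definition is_singleton (T : Type) (A : set T) : Prop := exists y, A = [set y].

(* Main.v *)
Require Import Defs.
From HB Require Import structures.
From mathcomp Require Import all_boot all_order all_algebra.
From mathcomp Require Import all_classical all_reals all_analysis.
From mathcomp Require Import borel_hierarchy.
Local Open Scope classical_set_scope.

Lemma fiber_lemma (X cX dX : topologicalType)
  (ec : X -> cX) (ed : X -> dX) (phi : cX -> dX) :
  hausdorff_space cX -> continuous ec -> dense (range ec) -> injective ed ->
  (forall U : set X, open U -> exists V : set dX, open V /\ ed @` U = V `&` range ed) ->
  continuous phi -> ed = phi \o ec -> forall a y, phi y = ed a -> y = ec a.
Proof.
move=> hc cec dec ied emb cphi edE a y phiy.
case: (eqVneq y (ec a)) => // nya.
move: hc; rewrite open_hausdorff => hc.
have [[U V] /= [Uy Va] [oU oV /eqP UV0]] := hc _ _ nya.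
have [W [oW EW]] := emb (ec @^-1` V) (proj1 (continuousP ec) cec _ oV).
have Wa : W (ed a).
  have : (ed @` (ec @^-1` V)) (ed a) by exists a => //; rewrite /= -inE.
  by rewrite EW => -[].
have oO : open (phi @^-1` W `&` U) by apply: openI => //; exact: (proj1 (continuousP phi) cphi).
have Wy : W (phi y) by rewrite phiy.
have [z [[Wz Uz] [b _ ebz]]] := dec _ (ex_intro _ y (conj Wy (set_mem Uy))) oO.
rewrite -ebz in Wz Uz.
have : (W `&` range ed) (ed b) by split; [rewrite edE | exists b].
rewrite -EW => -[c Vc /ied cb]; subst c.
have : (U `&` V) (ec b) by [].
by rewrite UV0.
Qed.

Lemma image_Fsigma (cX dX : topologicalType) (phi : cX -> dX) (S : set cX) :
  compact [set: cX] -> hausdorff_space dX -> continuous phi -> Fsigma S ->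
  Fsigma (phi @` S).
Proof.
move=> cc hd cphi [F cF ->].
exists (fun i => phi @` F i).
  move=> i; apply: compact_closed => //; apply: continuous_compact.
    exact: continuous_subspaceT.
  exact: (subclosed_compact (cF i) cc).
by rewrite image_bigcup.
Qed.

Lemma preimage_Fsigma (cX dX : topologicalType) (phi : cX -> dX) (S : set dX) :
  continuous phi -> Fsigma S -> Fsigma (phi @^-1` S).
Proof.
move=> cphi [F cF ->].
exists (fun i => phi @^-1` F i).
  by move=> i; apply: (proj1 (continuous_closedP phi) cphi).
by rewrite preimage_bigcup.
Qed.

Theorem proposition3p2 (X cX dX : topologicalType)
  (ec : X -> cX) (ed : X -> dX) (phi : cX -> dX) :
  tychonoff_space X ->
  compactification ec -> compactification ed ->
  continuous phi -> ed = phi \o ec ->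
  Fsigmadelta (range ec) ->
  (Fsigmadelta (range ed) <->
   exists H : (set cX)^nat, (forall n, Fsigma (H n)) /\
     forall x : dX, ~ is_singleton (phi @^-1` [set x]) ->
       exists n, range ec `<=` H n /\ H n `<=` ~` (phi @^-1` [set x])).
Proof.
move=> _ [cc [hc [[cec [iec embc]] dec]]] [_ [hd [[ced [ied embd]] _]]] cphi edE
  [K fK eK].
have fib := @fiber_lemma _ _ _ ec ed phi hc cec dec ied embd cphi edE.
split.
- move=> [G fG eG].
  exists (fun n => phi @^-1` G n); split.
    by move=> n; apply: preimage_Fsigma.
  move=> x nsx.
  have nx : ~ range ed x.
    move=> [a _ ea]; apply: nsx; exists (ec a).
    apply/seteqP; split => y /=.
      by move=> phiy; apply: fib; rewrite phiy ea.
    by move=> ->; rewrite -ea edE.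
  have : ~ (\bigcap_i G i) x by rewrite -eG.
  move=> /existsNP [n /not_implyP [_ nGx]].
  exists n; split.
    move=> _ [a _ <-] /=.
    have : (\bigcap_i G i) (ed a) by rewrite -eG; exists a.
    by move=> /(_ n I); rewrite edE.
  by move=> y /= Gy phiy; apply: nGx; rewrite -phiy.
- move=> [H [fH HP]].
  pose H' n := if `[< range ec `<=` H n >] then phi @` H n else setT.
  exists (fun i => if odd i then H' i./2 else phi @` K i./2).
    move=> j; rewrite /H'; case: (odd j).
      case: ifP => _; [exact: image_Fsigma | exact: closed_Fsigma closedT].
    exact: image_Fsigma.
  apply/seteqP; split.
    move=> _ [a _ <-] i _ /=.
    have Ka : forall m, K m (ec a).
      move=> m; have : (\bigcap_i K i) (ec a) by rewrite -eK; exists a.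
      by apply.
    case: (odd i).
      rewrite /H'; case: ifP => // /asboolP sub.
      by exists (ec a); [apply: sub; exists a | rewrite edE].
    by exists (ec a); [apply: Ka | rewrite edE].
  move=> x Gx.
  apply: contrapT => nx.
  have [sx|nsx] := pselect (is_singleton (phi @^-1` [set x])).
    case: sx => y ey.
    have phiy : phi y = x by have : (phi @^-1` [set x]) y by rewrite ey.
    have ny : ~ range ec y.
      by move=> [a _ ea]; apply: nx; exists a => //; rewrite edE /= ea.
    have : ~ (\bigcap_i K i) y by rewrite -eK.
    move=> /existsNP [m /not_implyP [_ nKy]].
    have := Gx m.*2 I; rewrite odd_double doubleK => -[z Kz phiz].
    have : (phi @^-1` [set x]) z by [].
    by rewrite ey => zy; apply: nKy; rewrite -zy.
  have [n [sub Hn]] := HP x nsx.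
  have := Gx n.*2.+1 I; rewrite /= odd_double /= uphalf_double /H'.
  rewrite (_ : `[< _ >] = true); last exact/asboolP.
  by move=> [z Hz phiz]; exact: (Hn z Hz phiz).
Qed.
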